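(* Let $m=2k+1$ with $k\in\mathbb{N}$. For every $\beta\in(1,\frac{k+1+\sqrt{k^2+6k+5}}{2})$, every $x\in(0,\frac{m}{\beta-1})$ has uncountably many $\beta$-expansions, i.e. $\Sigma_{\beta,m}(x)$ is uncountable.
   Context: $\Sigma_{\beta,m}(x)=\{(\epsilon_i)_{i=1}^\infty\in\{0,\ldots,m\}^{\mathbb{N}}:\sum_{i\ge1}\epsilon_i\beta^{-i}=x\}$; its elements are the $\beta$-expansions of $x$. *)

(* Defs.v *)
From Stdlib Require Import Reals.
Open Scope R_scope.

(* A sequence eps : nat -> nat encodes (epsilon_i)_{i>=1} via epsilon_{i} = eps (i-1).
   beta_expansion beta m x eps  <->  eps in Sigma_{beta,m}(x):
   all digits in {0,...,m} and sum_{i>=1} epsilon_i beta^{-i} = x. *)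
Definition beta_expansion (beta : R) (m : nat) (x : R) (eps : nat -> nat) : Prop :=
  (forall i, (eps i <= m)%nat) /\
  infinite_sum (fun i => INR (eps i) / beta ^ (S i)) x.

Definition countable_set (S : (nat -> nat) -> Prop) : Prop :=
  exists f : (nat -> nat) -> nat,
    forall a b, S a -> S b -> f a = f b -> a = b.

(* Main.v *)
Require Import Defs.
From Stdlib Require Import Reals Lra Lia Psatz ClassicalEpsilon FunctionalExtensionality.
Open Scope R_scope.

Lemma pow_big b y : 1 < b -> 0 < y -> exists n, 1 < b^n * y.
Proof.
  intros Hb Hy.
  assert (H : Rabs (/b) < 1).
  { rewrite Rabs_pos_eq. 2: left; apply Rinv_0_lt_compat; lra.
    rewrite <- Rinv_1. apply Rinv_lt_contravar; lra. }
  destruct (pow_lt_1_zero _ H y Hy) as [N HN].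
  exists N. specialize (HN N (le_n N)).
  rewrite pow_inv in HN.
  assert (Hp : 0 < b^N) by (apply pow_lt; lra).
  rewrite Rabs_pos_eq in HN. 2: left; apply Rinv_0_lt_compat; lra.
  apply Rmult_lt_compat_l with (r := b^N) in HN; auto.
  rewrite Rinv_r in HN; lra.
Qed.

Definition adm (b M : R) (k : nat) (x : R) (d : nat) : Prop :=
  (d <= 2*k+1)%nat /\ 0 < b*x - INR d < M.

Definition Gs b M k x := exists d0 d1, (d0 < d1)%nat /\ adm b M k x d0 /\ adm b M k x d1.

Lemma floor_lemma : forall N y, 0 < y -> y <= INR N + 1 ->
  exists n, (n <= N)%nat /\ INR n < y <= INR n + 1.
Proof.
  induction N; intros y Hy Hy2.
  - exists 0%nat. simpl in *. split; [lia| lra].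
  - destruct (Rle_lt_dec y (INR N + 1)) as [H|H].
    + destruct (IHN y Hy H) as [n [Hn1 Hn2]]. exists n; split; [lia|auto].
    + exists (S N). rewrite S_INR in *. split; [lia|lra].
Qed.

Section Sx.
End Sx.

Lemma adm_exists b M k x : 1 < b -> M * (b-1) = INR (2*k+1) -> 1 < M ->
  0 < x < M -> exists d, adm b M k x d.
Proof.
  intros Hb HM HM1 [Hx1 Hx2].
  assert (Hbx : b*x < b*M) by (apply Rmult_lt_compat_l; lra).
  destruct (Rle_lt_dec (b*x) (INR (2*k+1) + 1)) as [H|H].
  - assert (Hy : 0 < b*x) by (apply Rmult_lt_0_compat; lra).
    destruct (floor_lemma _ _ Hy H) as [n [Hn1 Hn2]].
    exists n. split; [auto| lra].
  - exists (2*k+1)%nat. split; [lia| lra].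
Qed.

Lemma INRm k : INR (2*k+1) = 2 * INR k + 1.
Proof. rewrite plus_INR, mult_INR. simpl. lra. Qed.

Lemma M_gt1 b M k : 1 < b -> M * (b-1) = INR (2*k+1) -> b < INR k + M -> 1 < M.
Proof. intros Hb HM Hk. rewrite INRm in HM. pose proof (pos_INR k). nra. Qed.

Lemma mid_G b M k x : 1 < b -> M * (b-1) = INR (2*k+1) -> b < INR k + M ->
  M - 1 <= x <= 1 -> Gs b M k x.
Proof.
  intros Hb HM Hk Hx. rewrite INRm in HM. pose proof (pos_INR k).
  exists k, (k+1)%nat. split; [lia|]. unfold adm. rewrite plus_INR; simpl.
  assert (b*x >= b*(M-1)) by nra. assert (b*x <= b) by nra.
  split; split; try lia; nra.
Qed.

Lemma uniq_adm b M k x j d : ~ Gs b M k x -> adm b M k x j -> adm b M k x d -> d = j.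
Proof.
  intros HG Hj Hd. destruct (Nat.lt_total d j) as [H|[H|H]]; auto;
  exfalso; apply HG; [exists d, j | exists j, d]; auto.
Qed.

Lemma lower_bd b M k x j : ~ Gs b M k x -> adm b M k x j -> (1 <= j)%nat ->
  M - 1 <= b*x - INR j.
Proof.
  intros HG [Hj1 Hj2] H1.
  destruct (Rle_lt_dec (M-1) (b*x - INR j)) as [?|Hc]; auto. exfalso.
  apply HG. exists (j-1)%nat, j. split; [lia|]. split; [|split; auto].
  split; [lia|]. rewrite minus_INR; [|lia]. simpl. lra.
Qed.

Lemma upper_bd b M k x j : 1 < M -> ~ Gs b M k x -> adm b M k x j -> (j < 2*k+1)%nat ->
  b*x - INR j <= 1.
Proof.
  intros HM1 HG [Hj1 Hj2] H1.
  destruct (Rle_lt_dec (b*x - INR j) 1) as [?|Hc]; auto. exfalso.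
  apply HG. exists j, (j+1)%nat. split; [lia|]. split; [split; auto|].
  split; [lia|]. rewrite plus_INR. simpl. lra.
Qed.

Inductive Reach (b M : R) (k : nat) : R -> Prop :=
 | RG x : Gs b M k x -> Reach b M k x
 | RS x d : adm b M k x d -> ~ Gs b M k x -> Reach b M k (b*x - INR d) -> Reach b M k x.

Lemma reach_low b M k : 1 < b -> M * (b-1) = INR (2*k+1) -> b < INR k + M ->
  forall n x, 0 < x <= 1 -> 1 < b^n * x -> Reach b M k x.
Proof.
  intros Hb HM Hk. pose proof (M_gt1 _ _ _ Hb HM Hk) as HM1.
  induction n; intros x Hx Hn.
  - simpl in Hn; lra.
  - destruct (classic (Gs b M k x)) as [HG|HG]. { now apply RG. }
    destruct (adm_exists b M k x Hb HM HM1 ltac:(lra)) as [j Hj].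
    apply (RS _ _ _ x j Hj HG).
    destruct (Nat.eq_dec j 0) as [->|Hj0].
    + simpl INR. apply IHn.
      * pose proof (upper_bd _ _ _ _ _ HM1 HG Hj ltac:(lia)). simpl in H. nra.
      * simpl in Hn. lra.
    + destruct (Nat.eq_dec j (2*k+1)) as [->|Hjm].
      * exfalso. pose proof (lower_bd _ _ _ _ _ HG Hj ltac:(lia)).
        rewrite INRm in H. pose proof (pos_INR k). nra.
      * apply RG. apply mid_G; auto. split.
        -- apply (lower_bd _ _ _ _ _ HG Hj). lia.
        -- apply (upper_bd _ _ _ _ _ HM1 HG Hj). destruct Hj; lia.
Qed.

Lemma reach_high b M k : 1 < b -> M * (b-1) = INR (2*k+1) -> b < INR k + M ->
  forall n x, M - 1 <= x < M -> 1 < b^n * (M - x) -> Reach b M k x.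
Proof.
  intros Hb HM Hk. pose proof (M_gt1 _ _ _ Hb HM Hk) as HM1.
  induction n; intros x Hx Hn.
  - simpl in Hn; lra.
  - destruct (classic (Gs b M k x)) as [HG|HG]. { now apply RG. }
    destruct (adm_exists b M k x Hb HM HM1 ltac:(lra)) as [j Hj].
    apply (RS _ _ _ x j Hj HG).
    destruct (Nat.eq_dec j (2*k+1)) as [->|Hjm].
    + apply IHn.
      * pose proof (lower_bd _ _ _ _ _ HG Hj ltac:(lia)). destruct Hj. lra.
      * simpl in Hn. rewrite INRm in *. replace (M - (b*x - (2*INR k+1))) with (b*(M-x)) by nra. lra.
    + destruct (Nat.eq_dec j 0) as [->|Hj0].
      * exfalso. pose proof (upper_bd _ _ _ _ _ HM1 HG Hj ltac:(lia)).
        simpl in H. pose proof (pos_INR k). rewrite INRm in HM. nra.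
      * apply RG. apply mid_G; auto. split.
        -- apply (lower_bd _ _ _ _ _ HG Hj). lia.
        -- apply (upper_bd _ _ _ _ _ HM1 HG Hj). destruct Hj; lia.
Qed.

Lemma reach_all b M k : 1 < b -> M * (b-1) = INR (2*k+1) -> b < INR k + M ->
  forall x, 0 < x < M -> Reach b M k x.
Proof.
  intros Hb HM Hk. pose proof (M_gt1 _ _ _ Hb HM Hk) as HM1. intros x Hx.
  destruct (classic (Gs b M k x)) as [HG|HG]. { now apply RG. }
  destruct (adm_exists b M k x Hb HM HM1 Hx) as [j Hj].
  apply (RS _ _ _ x j Hj HG).
  destruct (Nat.eq_dec j 0) as [->|Hj0].
  + pose proof (upper_bd _ _ _ _ _ HM1 HG Hj ltac:(lia)).
    destruct Hj as [_ Hj]. simpl INR in *.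
    destruct (pow_big b (b*x - 0) Hb ltac:(lra)) as [n Hn].
    apply (reach_low b M k Hb HM Hk n); lra.
  + destruct (Nat.eq_dec j (2*k+1)) as [->|Hjm].
    * pose proof (lower_bd _ _ _ _ _ HG Hj ltac:(lia)). destruct Hj as [_ Hj].
      destruct (pow_big b (M - (b*x - INR (2*k+1))) Hb ltac:(lra)) as [n Hn].
      apply (reach_high b M k Hb HM Hk n); lra.
    * apply RG. apply mid_G; auto. split.
      -- apply (lower_bd _ _ _ _ _ HG Hj). lia.
      -- apply (upper_bd _ _ _ _ _ HM1 HG Hj). destruct Hj; lia.
Qed.

Definition pick b M k x : nat*nat := epsilon (inhabits (0%nat,0%nat))
  (fun p => adm b M k x (fst p) /\ adm b M k x (snd p) /\ (Gs b M k x -> (fst p < snd p)%nat)).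

Lemma pick_spec b M k x : 1 < b -> M * (b-1) = INR (2*k+1) -> 1 < M -> 0 < x < M ->
  adm b M k x (fst (pick b M k x)) /\ adm b M k x (snd (pick b M k x)) /\
  (Gs b M k x -> (fst (pick b M k x) < snd (pick b M k x))%nat).
Proof.
  intros Hb HM HM1 Hx. unfold pick. apply epsilon_spec.
  destruct (classic (Gs b M k x)) as [HG|HG].
  - destruct HG as [d0 [d1 [H1 [H2 H3]]]]. exists (d0,d1). simpl. auto.
  - destruct (adm_exists b M k x Hb HM HM1 Hx) as [j Hj]. exists (j,j). simpl.
    split; auto. split; auto. tauto.
Qed.

Definition branch b M k x := Nat.ltb (fst (pick b M k x)) (snd (pick b M k x)).

Definition dig b M k (s : nat -> bool) x i :=
  if branch b M k x then (if s i then snd (pick b M k x) else fst (pick b M k x))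
  else fst (pick b M k x).

Fixpoint st b M k x0 (s : nat -> bool) n : R * nat :=
  match n with
  | O => (x0, O)
  | S n' => let p := st b M k x0 s n' in
      (b * fst p - INR (dig b M k s (fst p) (snd p)),
       if branch b M k (fst p) then S (snd p) else snd p)
  end.

Definition digits b M k x0 s n :=
  dig b M k s (fst (st b M k x0 s n)) (snd (st b M k x0 s n)).

Lemma st_J b M k x0 s : 1 < b -> M * (b-1) = INR (2*k+1) -> 1 < M -> 0 < x0 < M ->
  forall n, 0 < fst (st b M k x0 s n) < M /\ adm b M k (fst (st b M k x0 s n)) (digits b M k x0 s n).
Proof.
  intros Hb HM HM1 Hx. 
  assert (Hd : forall x i, 0 < x < M -> adm b M k x (dig b M k s x i)).
  { intros x i Hx'. destruct (pick_spec b M k x Hb HM HM1 Hx') as [H1 [H2 _]].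
    unfold dig. destruct (branch b M k x), (s i); auto. }
  induction n.
  - simpl. split; auto. apply Hd; auto.
  - destruct IHn as [H1 H2]. 
    assert (0 < fst (st b M k x0 s (S n)) < M).
    { simpl. apply H2. }
    split; auto. apply Hd; auto.
Qed.

Lemma expansion_id b M k x0 s : 1 < b -> forall n,
  x0 = sum_f_R0 (fun i => INR (digits b M k x0 s i) / b ^ (S i)) n
       + fst (st b M k x0 s (S n)) / b ^ (S n).
Proof.
  intros Hb. assert (Hb0 : b <> 0) by lra.
  induction n.
  - simpl. unfold digits. simpl. field. auto.
  - rewrite IHn at 1. simpl sum_f_R0.
    replace (fst (st b M k x0 s (S (S n)))) with
      (b * fst (st b M k x0 s (S n)) - INR (digits b M k x0 s (S n))) by reflexivity.
    assert (b ^ n <> 0) by (apply pow_nonzero; auto).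
    simpl pow. field. auto.
Qed.

Lemma is_exp b M k x0 s : 1 < b -> M * (b-1) = INR (2*k+1) -> 1 < M -> 0 < x0 < M ->
  beta_expansion b (2*k+1) x0 (digits b M k x0 s).
Proof.
  intros Hb HM HM1 Hx. split.
  - intro i. apply (st_J b M k x0 s Hb HM HM1 Hx i).
  - intros eps Heps.
    destruct (pow_big b (eps / M) Hb) as [N HN].
    { apply Rdiv_lt_0_compat; lra. }
    exists N. intros n Hn. unfold Rdist.
    pose proof (expansion_id b M k x0 s Hb n) as E.
    destruct (st_J b M k x0 s Hb HM HM1 Hx (S n)) as [[HX1 HX2] _].
    set (X := fst (st b M k x0 s (S n))) in *.
    set (S0 := sum_f_R0 _ n) in *.
    replace (S0 - x0) with (- (X / b ^ S n)) by lra.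
    rewrite Rabs_Ropp.
    assert (HP : 0 < b ^ N) by (apply pow_lt; lra).
    assert (HPn : b ^ N <= b ^ S n) by (apply Rle_pow; [lra | lia]).
    rewrite Rabs_pos_eq. 2: { apply Rlt_le, Rdiv_lt_0_compat; lra. }
    apply Rlt_le_trans with (M / b ^ N).
    + unfold Rdiv. apply Rle_lt_trans with (X * / b ^ N).
      * apply Rmult_le_compat_l; [lra|]. apply Rinv_le_contravar; lra.
      * apply Rmult_lt_compat_r; [apply Rinv_0_lt_compat; lra | lra].
    + apply Rmult_lt_compat_l with (r := M) in HN; [|lra].
      unfold Rdiv in *. 
      apply Rmult_le_reg_r with (b ^ N); auto.
      rewrite Rmult_assoc, Rinv_l by lra. assert (E2 : M * (b^N*(eps*/M)) = b^N*eps) by (field; lra). lra.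
Qed.

Lemma st_eq b M k x0 s s' : (forall n, digits b M k x0 s n = digits b M k x0 s' n) ->
  forall n, st b M k x0 s n = st b M k x0 s' n.
Proof.
  intros Hd. induction n; auto.
  specialize (Hd n). unfold digits in Hd. simpl. rewrite <- IHn.
  rewrite <- IHn in Hd. rewrite Hd. reflexivity.
Qed.

Lemma reach_branch b M k x0 s : 1 < b -> M * (b-1) = INR (2*k+1) -> 1 < M -> 0 < x0 < M ->
  forall x, Reach b M k x -> forall n, fst (st b M k x0 s n) = x ->
  exists m, branch b M k (fst (st b M k x0 s (n+m))) = true /\
            snd (st b M k x0 s (n+m)) = snd (st b M k x0 s n).
Proof.
  intros Hb HM HM1 Hx0 x HR. induction HR as [x HG | x d Hd HG HR IH]; intros n Hn.
  - exists 0%nat. rewrite Nat.add_0_r. split; auto.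
    destruct (st_J b M k x0 s Hb HM HM1 Hx0 n) as [HJ _].
    destruct (pick_spec b M k _ Hb HM HM1 HJ) as [_ [_ H3]].
    unfold branch. apply Nat.ltb_lt. rewrite Hn in *. auto.
  - destruct (branch b M k x) eqn:Ebr.
    + exists 0%nat. rewrite Nat.add_0_r. rewrite Hn. auto.
    + destruct (st_J b M k x0 s Hb HM HM1 Hx0 n) as [HJ _].
      destruct (pick_spec b M k _ Hb HM HM1 HJ) as [H1 _]. rewrite Hn in H1.
      pose proof (uniq_adm _ _ _ _ _ _ HG Hd H1) as Hu.
      destruct (IH (S n)) as [m [Hm1 Hm2]].
      { simpl. unfold dig. rewrite Hn, Ebr, Hu. reflexivity. }
      exists (S m). replace (n + S m)%nat with (S n + m)%nat by lia. split; auto.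
      rewrite Hm2. simpl. rewrite Hn, Ebr. reflexivity.
Qed.

Lemma every_index b M k x0 s : 1 < b -> M * (b-1) = INR (2*k+1) -> b < INR k + M -> 0 < x0 < M ->
  forall i, exists n, snd (st b M k x0 s n) = i /\ branch b M k (fst (st b M k x0 s n)) = true.
Proof.
  intros Hb HM Hk Hx0. pose proof (M_gt1 _ _ _ Hb HM Hk) as HM1.
  assert (Hstep : forall n, exists m, branch b M k (fst (st b M k x0 s (n+m))) = true /\
            snd (st b M k x0 s (n+m)) = snd (st b M k x0 s n)).
  { intro n. destruct (st_J b M k x0 s Hb HM HM1 Hx0 n) as [HJ _].
    apply (reach_branch b M k x0 s Hb HM HM1 Hx0 _ (reach_all b M k Hb HM Hk _ HJ)). auto. }
  induction i.
  - destruct (Hstep 0%nat) as [m [H1 H2]]. exists m. simpl in *. auto.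
  - destruct IHi as [n [H1 H2]].
    destruct (Hstep (S n)) as [m [H3 H4]]. exists (S n + m)%nat. split; auto.
    rewrite H4. simpl. rewrite H2. rewrite H1. reflexivity.
Qed.

Lemma digits_inj b M k x0 s s' : 1 < b -> M * (b-1) = INR (2*k+1) -> b < INR k + M -> 0 < x0 < M ->
  digits b M k x0 s = digits b M k x0 s' -> s = s'.
Proof.
  intros Hb HM Hk Hx0 Heq.
  assert (Hd : forall n, digits b M k x0 s n = digits b M k x0 s' n) by (rewrite Heq; auto).
  pose proof (st_eq _ _ _ _ _ _ Hd) as Hst.
  pose proof (M_gt1 _ _ _ Hb HM Hk) as HM1.
  apply functional_extensionality. intro i.
  destruct (every_index b M k x0 s Hb HM Hk Hx0 i) as [n [H1 H2]].
  specialize (Hd n). unfold digits, dig in Hd. rewrite <- Hst in Hd.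
  rewrite H1, H2 in Hd. unfold branch in H2. apply Nat.ltb_lt in H2.
  destruct (s i), (s' i); auto; lia.
Qed.

Lemma cantor (h : (nat -> bool) -> nat) : ~ (forall a b, h a = h b -> a = b).
Proof.
  intro Hinj.
  set (d := fun n => if excluded_middle_informative (exists s, h s = n /\ s n = true) then false else true).
  assert (Hd : d (h d) = if excluded_middle_informative (exists s, h s = h d /\ s (h d) = true) then false else true) by reflexivity.
  destruct (excluded_middle_informative _) as [Hex|Hn].
  - destruct Hex as [s [Hs1 Hs2]]. pose proof (Hinj _ _ Hs1) as Hs. subst s. congruence.
  - apply Hn. exists d. split; auto.
Qed.

Theorem proposition3p6 (k : nat) (beta x : R) :
  1 < beta ->
  beta < (INR k + 1 + sqrt (INR k ^ 2 + 6 * INR k + 5)) / 2 ->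
  0 < x -> x < INR (2 * k + 1) / (beta - 1) ->
  ~ countable_set (beta_expansion beta (2 * k + 1) x).
Proof.
  intros Hb Hbt Hx0 Hx1 [f Hf].
  set (M := INR (2*k+1) / (beta - 1)) in *.
  assert (HM : M * (beta - 1) = INR (2*k+1)) by (unfold M; field; lra).
  pose proof (pos_INR k) as HK.
  set (K := INR k) in *.
  assert (Hpoly : beta * beta - (K+1) * beta - (K+1) < 0).
  { set (D := K ^ 2 + 6 * K + 5) in *.
    assert (HD : 0 <= D) by (unfold D; nra).
    pose proof (sqrt_sqrt D HD) as Hs. pose proof (sqrt_pos D) as Hs0.
    set (sq := sqrt D) in *.
    set (t := 2 * beta - K - 1).
    assert (Ht : t < sq) by (unfold t; lra).
    assert (t * t < D).
    { destruct (Rle_lt_dec 0 t).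
      - nra.
      - assert (t > - (K+1)) by (unfold t; lra). unfold D. nra. }
    unfold t, D in *. nra. }
  assert (Hk : beta < K + M).
  { rewrite INRm in HM. fold K in HM.
    assert ((K + M - beta) * (beta - 1) > 0) by nra. 
    destruct (Rle_lt_dec (K + M - beta) 0); [nra | lra]. }
  assert (HxM : 0 < x < M) by lra.
  apply (cantor (fun s => f (digits beta M k x s))).
  intros a c E.
  apply (digits_inj beta M k x a c Hb HM Hk HxM).
  pose proof (M_gt1 _ _ _ Hb HM Hk) as HM1.
  apply Hf; auto; apply is_exp; auto.
Qed.
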